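(* Let $\mu$ be a positive Borel measure on $\mathbb{R}$, absolutely continuous with respect to Lebesgue measure, with finite moments of all orders, supported on a set $E\subseteq\mathbb{R}$ with infinitely many points, and let $c\in\mathbb{R}\setminus E$ and $N>0$. With the notation of the context, for every $n\ge1$, $$Q_n^{c,N}(x)=P_n(x)+\Lambda_n^c\,P_{n-1}(x),\qquad \Lambda_n^c=\Lambda_n^c(N)=\frac{\pi_{n-1}-r_{n-1}}{1+NB_n^c}-\pi_{n-1},$$ where $\pi_{n-1}=\frac{P_n(c)}{P_{n-1}(c)}$, $r_{n-1}=\frac{F_n(c)}{F_{n-1}(c)}$ and $B_n^c=\frac{-Q_n^c(c)P_{n-1}(c)}{\|P_{n-1}\|_\mu^2}$. In particular $\Lambda_n^c$ does not depend on $x$.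
   Context: $\{P_n\}_{n\ge0}$ is the monic orthogonal polynomial sequence (MOPS) for $\mu$, $\|f\|_\mu^2=\int_E f^2\,d\mu$. $F_n(s)=\int_E \frac{P_n(x)}{x-s}\,d\mu(x)$ for $s\in\mathbb{C}\setminus E$ (functions of the second kind), with the convention $F_{-1}(c)=1$. $\{Q_n^c\}_{n\ge0}$ is the MOPS with respect to $\langle f,g\rangle_\nu=\int_E f(x)g(x)\frac{1}{x-c}d\mu(x)$. $\{Q_n^{c,N}\}_{n\ge0}$ is the MOPS with respect to $\langle f,g\rangle_{\nu_N}=\int_E f(x)g(x)\frac{1}{x-c}d\mu(x)+Nf(c)g(c)$, i.e. for the Geronimus perturbed measure $\frac{1}{x-c}d\mu(x)+N\delta(x-c)$. *)

(* Defs.v *)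
From HB Require Import structures.
From mathcomp Require Import all_boot all_order all_algebra.
From mathcomp Require Import all_classical all_reals all_analysis.
Set Implicit Arguments. Unset Strict Implicit. Unset Printing Implicit Defensive.
Import Order.TTheory GRing.Theory Num.Theory.
Import numFieldNormedType.Exports.
Local Open Scope classical_set_scope.
Local Open Scope ring_scope.

(* Bilinear form of mu: <p,q>_mu = int_E p q dmu  (mu is carried by E). *)
Definition mu_ip (R : realType) (mu : {measure set R -> \bar R})
  (p q : {poly R}) : R :=
  Rintegral mu setT (fun x => p.[x] * q.[x]).

Definition nu_ip (R : realType) (mu : {measure set R -> \bar R}) (c : R)
  (p q : {poly R}) : R :=
  Rintegral mu setT (fun x => p.[x] * q.[x] / (x - c)).

Definition nuN_ip (R : realType) (mu : {measure set R -> \bar R}) (c N : R)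
  (p q : {poly R}) : R :=
  nu_ip mu c p q + N * p.[c] * q.[c].

Definition is_MOPS (R : realType) (ip : {poly R} -> {poly R} -> R)
  (P : nat -> {poly R}) : Prop :=
  forall n : nat, P n \is monic /\ size (P n) = n.+1 /\
    (forall m : nat, (m < n)%N -> ip (P n) (P m) = 0) /\ ip (P n) (P n) != 0.

Definition Fsk (R : realType) (mu : {measure set R -> \bar R})
  (P : nat -> {poly R}) (n : nat) (s : R) : R :=
  Rintegral mu setT (fun x => (P n).[x] / (x - s)).

Definition msupport (R : realType) (mu : {measure set R -> \bar R}) : set R :=
  [set x | forall e : R, 0 < e -> (0 < mu (ball x e))%E].

Definition Lambda (R : realType) (mu : {measure set R -> \bar R})
  (P Qc : nat -> {poly R}) (c N : R) (n : nat) : R :=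
  let pi := (P n).[c] / (P n.-1).[c] in
  let r := Fsk mu P n c / Fsk mu P n.-1 c in
  let B := - (Qc n).[c] * (P n.-1).[c] / mu_ip mu (P n.-1) (P n.-1) in
  (pi - r) / (1 + N * B) - pi.

(* Main.v *)
Require Import Defs.
From HB Require Import structures.
From mathcomp Require Import all_boot all_order all_algebra.
From mathcomp Require Import all_classical all_reals all_analysis.
From mathcomp Require Import ring lra measurable_realfun.
From Stdlib Require Import Classical.
Import Order.TTheory GRing.Theory Num.Theory.
Import numFieldNormedType.Exports.
Set Implicit Arguments. Unset Strict Implicit.
Local Open Scope classical_set_scope.
Local Open Scope ring_scope.
Lemma xxx0 (R : zmodType) (x : R) : x = x + x -> x = 0.
Proof. by move/(congr1 (fun y => y - x)); rewrite subrr addrK. Qed.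

Lemma size_sub_monic (R : realType) (q Q : {poly R}) (k : nat) :
  (size q <= k.+1)%N -> Q \is monic -> size Q = k.+1 ->
  (size ((- q`_k) *: Q + q)%R <= k)%N.
Proof.
move=> sq mQ sQ; apply/leq_sizeP => j hj.
rewrite coefD coefZ.
have [->|hjk] := eqVneq j k.
  have : lead_coef Q = 1 by apply/monicP.
  by rewrite lead_coefE sQ /= => ->; rewrite mulr1 addNr.
have hj' : (k.+1 <= j)%N by rewrite ltn_neqAle eq_sym hjk.
by rewrite (leq_sizeP _ _ sq j) // (leq_sizeP _ _ (eq_leq sQ) j) // mulr0 addr0.
Qed.

Lemma mops_zero (R : realType) (ip : {poly R} -> {poly R} -> R) (Q : nat -> {poly R}) :
  (forall k p q r, ip (k *: p + q) r = k * ip p r + ip q r) ->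
  is_MOPS ip Q -> forall n (p : {poly R}), (size p <= n)%N ->
  (forall m, (m < n)%N -> ip p (Q m) = 0) -> p = 0.
Proof.
move=> ipL hQ; elim=> [|n IH] p sp hp.
  by apply/eqP; rewrite -size_poly_eq0 -leqn0.
have [mQ [sQ [oQ nQ]]] := hQ n.
have e : (- p`_n) *: Q n + p = 0.
  apply: IH; first exact: size_sub_monic.
  move=> m hm; rewrite ipL oQ // mulr0 add0r hp //; exact: ltnW.
have ep : p = p`_n *: Q n by move/eqP: e; rewrite addrC addr_eq0 => /eqP {1}->; rewrite scaleNr opprK.
have : ip p (Q n) = 0 by apply: hp.
rewrite {1}ep -[_ *: Q n]addr0 ipL.
have -> : ip 0 (Q n) = 0.
  by apply: xxx0; have := ipL 1 0 0 (Q n); rewrite scale1r addr0 mul1r.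
rewrite addr0 => /eqP; rewrite mulf_eq0 (negbTE nQ) orbF => /eqP a0.
by rewrite ep a0 scale0r.
Qed.

Lemma mops_orth (R : realType) (ip : {poly R} -> {poly R} -> R) (Q : nat -> {poly R}) :
  (forall k p q r, ip r (k *: p + q) = k * ip r p + ip r q) ->
  is_MOPS ip Q -> forall r n, (forall m, (m < n)%N -> ip r (Q m) = 0) ->
  forall q : {poly R}, (size q <= n)%N -> ip r q = 0.
Proof.
move=> ipR hQ r; elim=> [|n IH] hr q sq.
  have -> : q = 0 by apply/eqP; rewrite -size_poly_eq0 -leqn0.
  by apply: xxx0; have := ipR 1 0 0 r; rewrite scale1r addr0 mul1r.
have [mQ [sQ _]] := hQ n.
have e : ip r ((- q`_n) *: Q n + q) = 0.
  apply: IH; last exact: size_sub_monic.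
  by move=> m hm; apply: hr; exact: ltnW.
move: e; rewrite ipR hr // mulr0 add0r //.
Qed.

Lemma main_alg (R : realType) (I J : {poly R} -> R) (c N : R)
  (P Qc QcN : nat -> {poly R}) :
  (forall k p q, I (k *: p + q) = k * I p + I q) ->
  (forall k p q, J (k *: p + q) = k * J p + J q) ->
  (forall s, J (('X - c%:P) * s) = I s) ->
  is_MOPS (fun p q => I (p * q)) P ->
  is_MOPS (fun p q => J (p * q)) Qc ->
  is_MOPS (fun p q => J (p * q) + N * p.[c] * q.[c]) QcN ->
  forall m, (P m).[c] != 0 ->
  QcN m.+1 = P m.+1 + ((((P m.+1).[c] / (P m).[c] - J (P m.+1) / J (P m)) /
     (1 + N * (- (Qc m.+1).[c] * (P m).[c] / I (P m * P m)))) -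
     (P m.+1).[c] / (P m).[c]) *: P m.
Proof.
move=> HI HJ HK hP hQc hQN m hb.
have ipIL : forall k p q r, I ((k *: p + q) * r) = k * I (p * r) + I (q * r).
  by move=> k p q r; rewrite mulrDl -scalerAl HI.
have ipIR : forall k p q r, I (r * (k *: p + q)) = k * I (r * p) + I (r * q).
  by move=> k p q r; rewrite mulrDr -scalerAr HI.
have ipJR : forall k p q r, J (r * (k *: p + q)) = k * J (r * p) + J (r * q).
  by move=> k p q r; rewrite mulrDr -scalerAr HJ.
have ipNL : forall k p q r,
    J ((k *: p + q) * r) + N * (k *: p + q).[c] * r.[c] =
    k * (J (p * r) + N * p.[c] * r.[c]) + (J (q * r) + N * q.[c] * r.[c]).
  by move=> k p q r; rewrite mulrDl -scalerAl HJ hornerD hornerZ; ring.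
have ipNR : forall k p q r,
    J (r * (k *: p + q)) + N * r.[c] * (k *: p + q).[c] =
    k * (J (r * p) + N * r.[c] * p.[c]) + (J (r * q) + N * r.[c] * q.[c]).
  by move=> k p q r; rewrite mulrDr -scalerAr HJ hornerD hornerZ; ring.
have Xn0 : 'X - c%:P != 0 by apply: monic_neq0; exact: monicXsubC.
have sdiv : forall q, size (q %/ ('X - c%:P)) = (size q).-1.
  by move=> q; rewrite size_divp // size_XsubC subn1.
have dec : forall p q, J (p * q) = I (p * (q %/ ('X - c%:P))) + q.[c] * J p.
  move=> p q; rewrite {1}(divp_eq q ('X - c%:P)) modp_XsubC.
  have -> : p * (q %/ ('X - c%:P) * ('X - c%:P) + (q.[c])%:P) =
      q.[c] *: p + ('X - c%:P) * (p * (q %/ ('X - c%:P))).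
    by rewrite -mul_polyC; ring.
  by rewrite HJ HK addrC.
have coefu : forall T k, T \is monic -> size T = k.+2 ->
    (T %/ ('X - c%:P))`_k = 1.
  move=> T k mT sT.
  have su : size (T %/ ('X - c%:P)) = k.+1 by rewrite sdiv sT.
  have : T`_k.+1 = 1 by move/monicP: mT; rewrite lead_coefE sT.
  rewrite {1}(divp_eq T ('X - c%:P)) modp_XsubC coefD coefC /= mulrBr coefB.
  rewrite coefMX coefMC /= (leq_sizeP _ _ (eq_leq su) k.+1) //.
  by rewrite mul0r subr0 addr0.
have orthP : forall k (s : {poly R}), (size s <= k)%N -> I (P k * s) = 0.
  move=> k s hs.
  apply: (@mops_orth R (fun p q => I (p * q)) _ ipIR hP (P k) k _ s hs).
  by move=> j hj; have [_ [_ [ho _]]] := hP k; apply: ho.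
have [mPm [sPm [_ nPm]]] := hP m.
have [mPm1 [sPm1 _]] := hP m.+1.
have Hu : forall u : {poly R}, (size u <= m.+1)%N -> u`_m = 1 -> I (P m * u) = I (P m * P m).
  move=> u su um.
  have := orthP m _ (size_sub_monic su mPm sPm).
  by rewrite ipIR um mulN1r => /eqP; rewrite addrC subr_eq0 => /eqP.
have sm : forall T : {poly R}, size T = m.+2 -> (size (T %/ ('X - c%:P))%R <= m.+1)%N.
  by move=> T sT; rewrite sdiv sT.
set a := (P m.+1).[c]; set b := (P m).[c]; set Fa := J (P m.+1);
set Fb := J (P m); set h := I (P m * P m).
have E1 : b * Fa = h + a * Fb.
  have h1 := dec (P m.+1) (P m).
  rewrite orthP ?sdiv ?sPm // add0r in h1.
  have h2 := dec (P m) (P m.+1).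
  rewrite Hu ?sm ?coefu // in h2.
  by rewrite -h1 mulrC h2.
have E2 : h + (Qc m.+1).[c] * Fb = 0.
  have [mQ [sQ _]] := hQc m.+1.
  have h2 := dec (P m) (Qc m.+1).
  rewrite Hu ?sm ?coefu // in h2.
  rewrite -h2 mulrC.
  apply: (@mops_orth R (fun p q => J (p * q)) _ ipJR hQc (Qc m.+1) m.+1 _ (P m)).
  - by move=> j hj; have [_ [_ [ho _]]] := hQc m.+1; apply: ho.
  - by rewrite sPm.
set T := QcN m.+1; set t := T.[c].
have [mT [sT [oT _]]] := hQN m.+1.
have E3 : h + t * Fb + N * t * b = 0.
  have h2 := dec (P m) T.
  rewrite Hu ?sm ?coefu // in h2.
  rewrite -h2 mulrC.
  apply: (@mops_orth R (fun p q => J (p * q) + N * p.[c] * q.[c]) _ ipNR hQN T m.+1 _ (P m)).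
  - by move=> j hj; apply: oT.
  - by rewrite sPm.
have hh : h != 0 by [].
have hFb : Fb != 0.
  apply/eqP => F0; move: E2; rewrite F0 mulr0 addr0 => /eqP; exact/negP.
have hG : Fb + N * b != 0.
  apply/eqP => G0; move: E3.
  have -> : h + t * Fb + N * t * b = h + t * (Fb + N * b) by ring.
  rewrite G0 mulr0 addr0 => /eqP; exact/negP.
set lam := (_ - _ / _) / _ - _.
have E4 : Fa + N * a + lam * (Fb + N * b) = 0.
  rewrite /lam.
  have hq : (Qc m.+1).[c] = - h / Fb.
    have hq' : (Qc m.+1).[c] * Fb = - h by apply/eqP; rewrite -addr_eq0 addrC E2.
    by rewrite -hq' mulfK.
  rewrite hq.
  have -> : 1 + N * (- (- h / Fb) * b / h) = (Fb + N * b) / Fb by field; apply/andP.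
  have hFa : Fa = (h + a * Fb) / b by rewrite -E1 mulrC (mulKf hb).
  rewrite hFa; field; rewrite hb hFb hG.
  done.
apply/eqP; rewrite -subr_eq0; apply/eqP.
apply: (@mops_zero R (fun p q => J (p * q) + N * p.[c] * q.[c]) _ ipNL hQN m.+1).
- apply/leq_sizeP => j hj.
  rewrite !coefE.
  rewrite (leq_sizeP _ _ (eq_leq sPm) j) //.
  rewrite mulr0 addr0.
  have [->|hjn] := eqVneq j m.+1.
    have : lead_coef T = 1 by apply/monicP.
    have : lead_coef (P m.+1) = 1 by apply/monicP.
    by rewrite !lead_coefE sPm1 sT /= => -> ->; rewrite subrr.
  have hj' : (m.+2 <= j)%N by rewrite ltn_neqAle eq_sym hjn.
  by rewrite (leq_sizeP _ _ (eq_leq sT) j) // (leq_sizeP _ _ (eq_leq sPm1) j) // subrr.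
- move=> j hj.
  have [_ [sQj _]] := hQN j.
  have -> : T - (P m.+1 + lam *: P m) = (-1) *: (P m.+1 + lam *: P m) + T.
    by rewrite scaleN1r addrC.
  rewrite ipNL oT // addr0.
  set p := P m.+1 + lam *: P m.
  set q := QcN j.
  rewrite dec.
  have -> : p = lam *: P m + P m.+1 by rewrite /p addrC.
  rewrite ipIL orthP; last by rewrite sdiv sQj.
  rewrite orthP; last by rewrite sdiv sQj /=; exact: ltnW.
  rewrite HJ hornerD hornerZ -/a -/b -/Fa -/Fb.
  have -> : lam * 0 + 0 + q.[c] * (lam * Fb + Fa) + N * (lam * b + a) * q.[c]
     = q.[c] * (Fa + N * a + lam * (Fb + N * b)) by ring.
  by rewrite E4 !mulr0.
Qed.
Lemma poly_int (R : realType) (mu : {measure set R -> \bar R}) :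
  (forall k, mu.-integrable setT (fun x : R => (x ^+ k)%:E)) ->
  forall p : {poly R}, mu.-integrable setT (EFin \o (fun x => p.[x])).
Proof.
move=> hk p.
have -> : EFin \o (fun x => p.[x]) =
    (fun x => \sum_(i < size p) (p`_i)%:E * (x ^+ i)%:E)%E.
  apply/funext => x /=.
  transitivity (\sum_(i < size p) (p`_i * x ^+ i)%:E)%E.
    by rewrite sumEFin horner_coef.
  by apply: eq_bigr => i _; rewrite EFinM.
apply: integrable_sum => // i _; apply: integrableZl => //; exact: hk.
Qed.

Lemma ball_null (R : realType) (mu : {measure set R -> \bar R}) (E : set R) (c : R) :
  E = msupport mu -> ~ E c -> exists2 e : R, 0 < e & mu (ball c e) = 0%E.
Proof.
move=> -> hc.
have [e he] := not_all_ex_not _ _ hc.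
have [e0 H] := imply_to_and _ _ he.
exists e => //.
have := measure_ge0 mu (ball c e); rewrite le_eqVlt => /predU1P [<-//|/H []].
Qed.

Lemma ana (R : realType) (mu : {measure set R -> \bar R}) (c e : R) :
  (forall k, mu.-integrable setT (fun x : R => (x ^+ k)%:E)) ->
  0 < e -> mu (ball c e) = 0%E ->
  [/\ forall k p q, Rintegral mu setT (fun x => (k *: p + q).[x]) =
        k * Rintegral mu setT (fun x => p.[x]) + Rintegral mu setT (fun x => q.[x]),
      forall k p q, Rintegral mu setT (fun x => (k *: p + q).[x] / (x - c)) =
        k * Rintegral mu setT (fun x => p.[x] / (x - c)) +
        Rintegral mu setT (fun x => q.[x] / (x - c)) &
      forall s, Rintegral mu setT (fun x => (('X - c%:P) * s).[x] / (x - c)) =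
        Rintegral mu setT (fun x => s.[x])].
Proof.
move=> hk e0 hB.
set B := ball c e; set S := setT `\` B.
have mB : measurable B by exact: measurable_ball.
have mS : measurable S by exact: measurableD.
have Sne : forall x, S x -> e <= `|x - c|.
  move=> x [_ nb]; rewrite leNgt; apply/negP => lt; apply: nb.
  by rewrite /B -ball_normE /ball_ /= distrC.
have Sneq : forall x, S x -> x - c != 0.
  by move=> x Sx; rewrite -normr_gt0 (lt_le_trans e0 (Sne x Sx)).
have mh : measurable_fun setT (fun x : R => (x - c)^-1).
  rewrite -(setvU [set c]).
  apply/(measurable_funU _ (measurableC (measurable_set1 c)) (measurable_set1 c)); split.
    apply: open_continuous_measurable_fun.
    by rewrite openC; exact: closed_eq.
    move=> x; rewrite inE /= => xc.
    have -> : (fun x : R => (x - c)^-1) = (fun x => (('X - c%:P).[x])^-1).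
      by apply/funext => y; rewrite hornerXsubC.
    apply: continuousV; last exact: continuous_horner.
    by rewrite hornerXsubC subr_eq0; apply/eqP.
  exact: measurable_fun_set1.
have mpol : forall r : {poly R}, measurable_fun setT (fun x => r.[x]).
  by move=> r; apply: continuous_measurable_fun; exact: continuous_horner.
have mJf : forall r : {poly R}, measurable_fun setT (fun x => r.[x] / (x - c)).
  by move=> r; apply: measurable_funM.
have hpol : forall r : {poly R}, mu.-integrable setT (fun x => (r.[x])%:E).
  by move=> r; exact: poly_int.
have hinvS : mu.-integrable S (fun x => ((x - c)^-1)%:E).
  apply: (@le_integrable _ _ _ mu S mS _ (fun x => (e^-1)%:E * (x ^+ 0)%:E)%E).
  - apply/measurable_EFinP; apply: (measurable_funS measurableT) => //.
  - move=> x Sx /=; rewrite expr0 mulr1 lee_fin.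
    have -> : `|e^-1| = e^-1 by rewrite gtr0_norm // invr_gt0.
    rewrite normfV lef_pV2 ?posrE ?normr_gt0 ?Sneq ?invr_gt0 //; exact: Sne.
  - apply: (@integrableS _ _ _ mu setT S) => //; apply: integrableZl => //; exact: hk.
have hJint : forall r : {poly R},
    mu.-integrable setT (fun x => (r.[x] / (x - c))%:E).
  move=> r; apply/(negligible_integrable mB measurableT _ hB).
    by apply/measurable_EFinP.
  set s := r %/ ('X - c%:P).
  apply: (eq_integrable mS (fun x => (s.[x])%:E + (r.[c])%:E * ((x - c)^-1)%:E)%E).
    move=> x; rewrite inE => Sx /=; rewrite -EFinM -EFinD; congr EFin.
    rewrite {2}(divp_eq r ('X - c%:P)) modp_XsubC hornerD hornerM hornerXsubC hornerC -/s.
    by field; exact: Sneq.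
  apply: (integrableD mS).
    by apply: (@integrableS _ _ _ mu setT S) => //.
  by apply: integrableZl.
split.
- move=> k p q.
  have -> : (fun x => (k *: p + q).[x]) = (fun x => k * p.[x] + q.[x]).
    by apply/funext => x; rewrite hornerD hornerZ.
  rewrite RintegralD //.
  + by rewrite RintegralZl //; exact: hpol.
  + by apply: (eq_integrable measurableT _ _ _ (hpol (k *: p))) => x _ /=; rewrite hornerZ.
  + exact: hpol.
- move=> k p q.
  have -> : (fun x => (k *: p + q).[x] / (x - c)) =
      (fun x => k * (p.[x] / (x - c)) + q.[x] / (x - c)).
    by apply/funext => x; rewrite hornerD hornerZ mulrDl mulrA.
  rewrite RintegralD //.
  + by rewrite RintegralZl //; exact: hJint.
  + by apply: (eq_integrable measurableT _ _ _ (hJint (k *: p))) => x _ /=; rewrite hornerZ mulrA.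
  + exact: hJint.
- move=> s; rewrite /Rintegral; congr fine.
  rewrite (negligible_integral mB measurableT (hJint _) hB).
  rewrite (negligible_integral mB measurableT (hpol s) hB).
  apply: eq_integral => x; rewrite inE => Sx; congr EFin.
  by rewrite hornerM hornerXsubC mulrC mulKf // Sneq.
Qed.

Theorem proposition1 (R : realType) (mu : {measure set R -> \bar R})
  (E : set R) (c N : R) (P Qc QcN : nat -> {poly R}) :
  mu `<< (@lebesgue_measure R) ->
  (forall k : nat, mu.-integrable setT (fun x : R => (x ^+ k)%:E)) ->
  E = msupport mu ->
  infinite_set E ->
  ~ E c ->
  0 < N ->
  is_MOPS (mu_ip mu) P ->
  is_MOPS (nu_ip mu c) Qc ->
  is_MOPS (nuN_ip mu c N) QcN ->
  forall n : nat, (1 <= n)%N ->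
  (P n.-1).[c] != 0 ->
  QcN n = P n + Lambda mu P Qc c N n *: P n.-1.
Proof.
move=> _ hk hE _ hc _ hP hQc hQN n n1 hb.
have [e e0 hB] := ball_null hE hc.
have [HI HJ HK] := ana hk e0 hB.
pose I := fun r : {poly R} => Rintegral mu setT (fun x => r.[x]).
pose J := fun r : {poly R} => Rintegral mu setT (fun x => r.[x] / (x - c)).
have eI : mu_ip mu = fun p q => I (p * q).
  apply/funext => p; apply/funext => q; rewrite /mu_ip /I.
  by congr (Rintegral _ _ _); apply/funext => x; rewrite hornerM.
have eJ : nu_ip mu c = fun p q => J (p * q).
  apply/funext => p; apply/funext => q; rewrite /nu_ip /J.
  by congr (Rintegral _ _ _); apply/funext => x; rewrite hornerM.
have eN : nuN_ip mu c N = fun p q => J (p * q) + N * p.[c] * q.[c].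
  by apply/funext => p; apply/funext => q; rewrite /nuN_ip eJ.
rewrite eI in hP; rewrite eJ in hQc; rewrite eN in hQN.
case: n n1 hb => [//|m] _ hb.
rewrite (@main_alg R I J c N P Qc QcN HI HJ HK hP hQc hQN m hb).
by rewrite /Lambda eI.
Qed.
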